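(* Let $\mathbf{CTC}$ be the Core Tuplix Calculus over a nonempty attribute set $A$ and a non-trivial cancellation meadow $\mathcal{D}$ (defined in the context). Every $\mathbf{CTC}$ tuplix term $t$ is derivably equal in $\mathbf{CTC}$ to a canonical term, i.e. to a term of the form \[ \gamma(p_0)\oplus a_1(p_1)\oplus\cdots\oplus a_k(p_k)\oplus x_1\oplus\cdots\oplus x_l \] for some $k,l\ge 0$, data terms $p_0,\dots,p_k$, pairwise distinct attributes $a_1,\dots,a_k\in A$, and tuplix variables $x_1,\dots,x_l$.
   Context: Data: a meadow is a commutative ring with unit with a total unary operation $(\cdot)^{-1}$ satisfying $(u^{-1})^{-1}=u$ and $u\cdot(u\cdot u^{-1})=u$; a non-trivial cancellation meadow additionally satisfies $0\neq 1$ and the cancellation law ($u\neq 0$ and $uv=uw$ imply $v=w$). Fix such a structure $\mathcal{D}$. Data terms are built from data variables ($u,v,w,\dots$), constants $0,1$, binary $+,\cdot$ and unary $-$, $(\cdot)^{-1}$; write $p/q$ for $p\cdot q^{-1}$ and $p-q$ for $p+(-q)$. Fix a nonempty set $A$ of attributes. Tuplix terms are built from tuplix variables $x,y,z,\dots$, constants $\epsilon$ (empty tuplix) and $\delta$ (null tuplix), entries $a(p)$ ($a\in A$, $p$ a data term), zero tests $\gamma(p)$ ($p$ a data term), and the binary operator $\oplus$ (conjunctive composition). $\mathbf{CTC}$ is the two-sorted equational proof system with axioms (T1) $x\oplus y=y\oplus x$; (T2) $(x\oplus y)\oplus z=x\oplus(y\oplus z)$; (T3) $x\oplus\epsilon=x$;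 (T4) $x\oplus\delta=\delta$; (T5) $a(u)\oplus a(v)=a(u+v)$; (T6) $\gamma(u)=\gamma(u/u)$; (T7) $\gamma(0)=\epsilon$; (T8) $\gamma(1)=\delta$; (T9) $\gamma(u)\oplus\gamma(v)=\gamma(u/u+v/v)$; (T10) $\gamma(u-v)\oplus a(u)=\gamma(u-v)\oplus a(v)$ (for all $a\in A$), together with the rule (DE): for all data terms $p,q$, if $\mathcal{D}\models p=q$ then $\gamma(p)=\gamma(q)$ is derivable. *)

(* Defs.v *)
From HB Require Import structures.
From mathcomp Require Import all_boot all_algebra.
From Stdlib Require List.
Set Implicit Arguments. Unset Strict Implicit. Unset Printing Implicit Defensive.
Import GRing.Theory.
Local Open Scope ring_scope.

Definition meadow_inv (R : comNzRingType) (inv : R -> R) : Prop :=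
  (forall u : R, inv (inv u) = u) /\ (forall u : R, u * (u * inv u) = u).

(* Cancellation law (0 <> 1 is part of comNzRingType). *)
Definition cancellation (R : comNzRingType) : Prop :=
  forall u v w : R, u != 0 -> u * v = u * w -> v = w.

Inductive dterm : Type :=
| DVar : nat -> dterm
| D0 : dterm
| D1 : dterm
| DAdd : dterm -> dterm -> dterm
| DMul : dterm -> dterm -> dterm
| DOpp : dterm -> dterm
| DInv : dterm -> dterm.

Definition DDiv (p q : dterm) : dterm := DMul p (DInv q).
Definition DSub (p q : dterm) : dterm := DAdd p (DOpp q).

Fixpoint deval (R : comNzRingType) (inv : R -> R) (env : nat -> R) (p : dterm) : R :=
  match p with
  | DVar n => env n
  | D0 => 0
  | D1 => 1
  | DAdd p q => deval inv env p + deval inv env q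
  | DMul p q => deval inv env p * deval inv env q
  | DOpp p => - deval inv env p
  | DInv p => inv (deval inv env p)
  end.

Definition dvalid (R : comNzRingType) (inv : R -> R) (p q : dterm) : Prop :=
  forall env : nat -> R, deval inv env p = deval inv env q.

Inductive tterm (A : Type) : Type :=
| TVar : nat -> tterm A
| TEps : tterm A
| TDelta : tterm A
| TEntry : A -> dterm -> tterm A
| TGamma : dterm -> tterm A
| TPlus : tterm A -> tterm A -> tterm A.
Arguments TVar {A}. Arguments TEps {A}. Arguments TDelta {A}. Arguments TGamma {A}.

Inductive ctc (R : comNzRingType) (inv : R -> R) (A : Type) : tterm A -> tterm A -> Prop :=
| ctc_refl t : ctc inv t t
| ctc_sym t s : ctc inv t s -> ctc inv s t
| ctc_trans t s r : ctc inv t s -> ctc inv s r -> ctc inv t r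
| ctc_cong t1 t2 s1 s2 : ctc inv t1 s1 -> ctc inv t2 s2 ->
    ctc inv (TPlus t1 t2) (TPlus s1 s2)
| ctc_T1 x y : ctc inv (TPlus x y) (TPlus y x)
| ctc_T2 x y z : ctc inv (TPlus (TPlus x y) z) (TPlus x (TPlus y z))
| ctc_T3 x : ctc inv (TPlus x TEps) x
| ctc_T4 x : ctc inv (TPlus x TDelta) TDelta
| ctc_T5 (a : A) p q : ctc inv (TPlus (TEntry a p) (TEntry a q)) (TEntry a (DAdd p q))
| ctc_T6 p : ctc inv (TGamma p) (TGamma (DDiv p p))
| ctc_T7 : ctc inv (TGamma D0) TEps
| ctc_T8 : ctc inv (TGamma D1) TDelta
| ctc_T9 p q : ctc inv (TPlus (TGamma p) (TGamma q)) (TGamma (DAdd (DDiv p p) (DDiv q q)))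
| ctc_T10 p q (a : A) : ctc inv (TPlus (TGamma (DSub p q)) (TEntry a p))
                                (TPlus (TGamma (DSub p q)) (TEntry a q))
| ctc_DE p q : dvalid inv p q -> ctc inv (TGamma p) (TGamma q).

Fixpoint tsum (A : Type) (t : tterm A) (ss : list (tterm A)) : tterm A :=
  match ss with
  | nil => t
  | cons s ss' => TPlus t (tsum s ss')
  end.

Definition canon (A : Type) (p0 : dterm) (es : list (A * dterm)) (xs : list nat) : tterm A :=
  tsum (TGamma p0) (List.map (fun e => TEntry e.1 e.2) es ++ List.map (@TVar A) xs).

(* Main.v *)
Require Import Defs.
From HB Require Import structures.
From mathcomp Require Import all_boot all_algebra.
From Stdlib Require List.
From Stdlib Require Import Permutation Classical.
Local Open Scope ring_scope.

Lemma lmap_cat {T U : Type} (f : T -> U) (l1 l2 : list T) :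
  List.map f (l1 ++ l2) = List.map f l1 ++ List.map f l2.
Proof. by elim: l1 => //= x l1 ->. Qed.

Lemma cat_app {T : Type} (l1 l2 : list T) : cat l1 l2 = List.app l1 l2.
Proof. by elim: l1 => //= x l1 ->. Qed.

Fixpoint lsum {A : Type} (l : list (tterm A)) : tterm A :=
  match l with nil => TEps | cons x l => TPlus x (lsum l) end.

Definition EE {A : Type} (es : list (A * dterm)) : list (tterm A) :=
  List.map (fun e => TEntry e.1 e.2) es.

Lemma tsum_lsum {R : comNzRingType} {inv : R -> R} {A : Type} (ss : list (tterm A)) t :
  ctc inv (tsum t ss) (lsum (t :: ss)).
Proof.
elim: ss t => [|s ss IH] t /=.
  by apply: ctc_sym; apply: ctc_T3.
by apply: ctc_cong; [apply: ctc_refl | apply: IH].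
Qed.

Lemma lsum_app {R : comNzRingType} {inv : R -> R} {A : Type} (l1 l2 : list (tterm A)) :
  ctc inv (lsum (l1 ++ l2)) (TPlus (lsum l1) (lsum l2)).
Proof.
elim: l1 => [|x l1 IH] /=.
  by apply: ctc_sym; apply: ctc_trans; [apply: ctc_T1 | apply: ctc_T3].
apply: ctc_trans; first by apply: ctc_cong; [apply: ctc_refl | apply: IH].
by apply: ctc_sym; apply: ctc_T2.
Qed.

Lemma lsum_perm {R : comNzRingType} {inv : R -> R} {A : Type} (l1 l2 : list (tterm A)) :
  Permutation l1 l2 -> ctc inv (lsum l1) (lsum l2).
Proof.
elim => [|x l l' _ IH|x y l|l l' l'' _ IH1 _ IH2] /=.
- by apply: ctc_refl.
- by apply: ctc_cong; [apply: ctc_refl | apply: IH].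
- apply: ctc_trans; first by apply: ctc_sym; apply: ctc_T2.
  apply: ctc_trans; last by apply: ctc_T2.
  by apply: ctc_cong; [apply: ctc_T1 | apply: ctc_refl].
- by apply: ctc_trans IH2.
Qed.

Lemma lsum_app_cong {R : comNzRingType} {inv : R -> R} {A : Type} (l1 l1' l2 : list (tterm A)) :
  ctc inv (lsum l1) (lsum l1') -> ctc inv (lsum (l1 ++ l2)) (lsum (l1' ++ l2)).
Proof.
move=> H.
apply: ctc_trans; first by apply: lsum_app.
apply: ctc_trans; last by apply: ctc_sym; apply: lsum_app.
by apply: ctc_cong; [apply: H | apply: ctc_refl].
Qed.

Lemma insert_entry {R : comNzRingType} {inv : R -> R} {A : Type} (es : list (A * dterm)) a q :
  List.NoDup (List.map fst es) ->
  exists gs, List.NoDup (List.map fst gs) /\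
    List.incl (List.map fst gs) (a :: List.map fst es) /\
    ctc inv (lsum (EE es ++ [:: TEntry a q])) (lsum (EE gs)).
Proof.
elim: es => [|[b p] es IH] /= Hnd.
  exists [:: (a, q)]; split; first by constructor; [auto | constructor].
  split; first by move=> z /= [->|[]]; left.
  by apply: ctc_refl.
inversion Hnd as [|b' l Hb Hnd']; subst.
case: (classic (b = a)) => [Eba|Nba].
  subst b.
  exists ((a, DAdd p q) :: es); split; first by constructor.
  split; first by move=> z /= [->|H]; [left|right; right].
  change (ctc inv (lsum (TEntry a p :: (EE es ++ [:: TEntry a q])))
    (lsum (TEntry a (DAdd p q) :: EE es))).
  apply: ctc_trans.
    apply: (@lsum_perm _ inv _ _ (TEntry a p :: TEntry a q :: EE es)).
    by constructor; apply: Permutation_sym; apply: Permutation_cons_append.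
  rewrite /=.
  apply: ctc_trans; first by apply: ctc_sym; apply: ctc_T2.
  by apply: ctc_cong; [apply: ctc_T5 | apply: ctc_refl].
have [gs [H1 [H2 H3]]] := IH Hnd'.
exists ((b, p) :: gs); split.
  constructor => // Hin.
  by case: (H2 _ Hin) => [E|E]; [apply: Nba|apply: Hb].
split.
  move=> z /= [->|H]; first by right; left.
  by case: (H2 _ H) => [->|E]; [left|right; right].
by apply: ctc_cong; [apply: ctc_refl | apply: H3].
Qed.

Lemma merge_entries {R : comNzRingType} {inv : R -> R} {A : Type} (fs es : list (A * dterm)) :
  List.NoDup (List.map fst es) ->
  exists gs, List.NoDup (List.map fst gs) /\
    ctc inv (lsum (EE es ++ EE fs)) (lsum (EE gs)).
Proof.
elim: fs es => [|[a q] fs IH] es Hnd.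
  by exists es; split => //; rewrite cats0; apply: ctc_refl.
have [gs [H1 [_ H3]]] := @insert_entry _ inv _ es a q Hnd.
have [hs [K1 K2]] := IH gs H1.
exists hs; split => //.
apply: ctc_trans; last by apply: K2.
have -> : EE es ++ EE ((a, q) :: fs) = (EE es ++ [:: TEntry a q]) ++ EE fs.
  by rewrite -catA.
by apply: lsum_app_cong.
Qed.

Lemma canon_lsum {R : comNzRingType} {inv : R -> R} {A : Type} p0 (es : list (A * dterm)) xs :
  ctc inv (canon p0 es xs) (lsum (TGamma p0 :: EE es ++ List.map (@TVar A) xs)).
Proof. by apply: tsum_lsum. Qed.

Theorem lemma1 (A : Type) (HA : inhabited A)
  (R : comNzRingType) (inv : R -> R)
  (Hmeadow : meadow_inv inv) (Hcanc : cancellation R)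
  (t : tterm A) :
  exists (p0 : dterm) (es : list (A * dterm)) (xs : list nat),
    List.NoDup (List.map fst es) /\ ctc inv t (canon p0 es xs).
Proof.
elim: t => [n| | |a p|p|t1 [p0 [es [xs [Hn1 H1]]]] t2 [q0 [fs [ys [Hn2 H2]]]]].
- exists D0, nil, [:: n]; split; first by constructor.
  rewrite /canon /=; apply: ctc_sym.
  apply: ctc_trans; first by apply: ctc_cong; [apply: ctc_T7 | apply: ctc_refl].
  by apply: ctc_trans; [apply: ctc_T1 | apply: ctc_T3].
- exists D0, nil, nil; split; first by constructor.
  by apply: ctc_sym; apply: ctc_T7.
- exists D1, nil, nil; split; first by constructor.
  by apply: ctc_sym; apply: ctc_T8.
- exists D0, [:: (a, p)], nil; split; first by constructor; [auto|constructor].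
  rewrite /canon /=; apply: ctc_sym.
  apply: ctc_trans; first by apply: ctc_cong; [apply: ctc_T7 | apply: ctc_refl].
  by apply: ctc_trans; [apply: ctc_T1 | apply: ctc_T3].
- exists p, nil, nil; split; first by constructor.
  by apply: ctc_refl.
- have [gs [Hg1 Hg2]] := @merge_entries _ inv _ fs es Hn1.
  exists (DAdd (DDiv p0 p0) (DDiv q0 q0)), gs, (xs ++ ys); split => //.
  apply: ctc_trans; first by apply: ctc_cong; [apply: H1 | apply: H2].
  apply: ctc_trans; first by apply: ctc_cong; apply: canon_lsum.
  apply: ctc_trans; last by apply: ctc_sym; apply: canon_lsum.
  apply: ctc_trans; first by apply: ctc_sym; apply: lsum_app.
  apply: ctc_trans.
    apply: (@lsum_perm _ inv _ _ (TGamma p0 :: TGamma q0 ::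
        (EE es ++ EE fs) ++ (List.map (@TVar A) xs ++ List.map (@TVar A) ys))).
    rewrite /=; constructor.
    rewrite !cat_app.
    set e1 := EE es; set e2 := EE fs; set v1 := List.map _ xs; set v2 := List.map _ ys.
    apply: Permutation_trans; first by apply: Permutation_sym; apply: Permutation_middle.
    constructor.
    rewrite -!List.app_assoc; apply: Permutation_app_head.
    rewrite !List.app_assoc; apply: Permutation_app_tail.
    by apply: Permutation_app_comm.
  rewrite /= lmap_cat.
  apply: ctc_trans; first by apply: ctc_sym; apply: ctc_T2.
  apply: ctc_cong; first by apply: ctc_T9.
  by apply: lsum_app_cong.
Qed.
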